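(* Let $C=\{(c_1,\dots,c_e)\in\mathbb{R}^e: c_1\ge-(c_2+\dots+c_e),\ c_i\ge0\ \text{for } 2\le i\le e\}$ and let $f\in\mathbb{K}[[\underline{x}]][y]$ be monic of degree $n\ge1$. Then $f$ is irreducible in $\mathbb{K}_C[[\underline{x}]][y]$ if and only if $F(X_1,\dots,X_e,y)=f(X_1,X_2X_1,\dots,X_eX_1,y)$ is irreducible in $\mathbb{K}[[\underline{X}]][y]$.
   Context: $\mathbb{K}$ is an algebraically closed field of characteristic $0$, $\underline{x}=(x_1,\dots,x_e)$, $\underline{X}=(X_1,\dots,X_e)$. $C$ is a line free cone, and $\mathbb{K}_C[[\underline{x}]]$ denotes the ring of formal series $\sum_{p\in C\cap\mathbb{Z}^e}a_p\underline{x}^p$; it contains $\mathbb{K}[[\underline{x}]]$. Irreducibility of a monic polynomial of degree $n$ in $A[y]$ means it is not a product of two monic polynomials of $A[y]$ of $y$-degrees strictly between $0$ and $n$. *)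

(* Defs.v *)
From HB Require Import structures.
From mathcomp Require Import all_boot all_order all_algebra.
From mathcomp Require Import boolp classical_sets cardinality fsbigop.
Set Implicit Arguments. Unset Strict Implicit. Unset Printing Implicit Defensive.
Import Order.TTheory GRing.Theory Num.Theory.
Local Open Scope ring_scope.
Local Open Scope classical_set_scope.

(* Exponent vectors in Z^e are row vectors 'rV[int]_e; the paper's x_1
   corresponds to the index i : 'I_e with val i = 0. *)
Notation exps e := 'rV[int]_e.

Definition series (K : comNzRingType) (e : nat) := exps e -> K.

Definition szero (K : comNzRingType) e : series K e := fun _ => 0.
Definition sone (K : comNzRingType) e : series K e :=
  fun p => if p == 0 then 1 else 0.

(* Cauchy product of series: (ab)_p = sum_{q} a_q b_{p-q}, a finitely
   supported sum (finite whenever a, b are supported in a line free cone). *)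
Definition smul (K : comNzRingType) e (a b : series K e) : series K e :=
  fun p => \sum_(q \in [set: exps e]) a q * b (p - q).

(* Support of a series contained in a set S of exponents: the series lies in
   K_S[[x]] := { sum_{p in S} a_p x^p }. *)
Definition supp_in (K : comNzRingType) e (S : set (exps e)) (a : series K e) :=
  forall p, a p != 0 -> S p.

Definition ypoly (K : comNzRingType) e := nat -> series K e.

Definition coeffs_in (K : comNzRingType) e (S : set (exps e)) (P : ypoly K e) :=
  forall k, supp_in S (P k).

Definition monic_deg (K : comNzRingType) e (P : ypoly K e) (d : nat) :=
  P d = @sone K e /\ forall k, (d < k)%N -> P k = @szero K e.

Definition ymul (K : comNzRingType) e (P Q : ypoly K e) : ypoly K e :=
  fun k p => \sum_(i < k.+1) smul (P i) (Q (k - i)%N) p.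

(* The positive orthant N^e: support set of K[[x]]. *)
Definition orthant (e : nat) : set (exps e) :=
  [set p | forall i : 'I_e, 0 <= p 0 i].

Definition coneC (e : nat) : set (exps e) :=
  [set p | (forall i : 'I_e, val i != 0%N -> 0 <= p 0 i) /\
           (forall i : 'I_e, val i = 0%N ->
              - (\sum_(j : 'I_e | val j != 0%N) p 0 j) <= p 0 i)].

Definition irreducible_over (K : comNzRingType) e (S : set (exps e))
    (f : ypoly K e) (n : nat) :=
  ~ exists (g h : ypoly K e) (d : nat),
      [/\ (0 < d < n)%N, coeffs_in S g /\ coeffs_in S h,
          monic_deg g d, monic_deg h (n - d)%N & ymul g h = f].

(* Substitution x_1 = X_1, x_i = X_i X_1 (i >= 2): the monomial x^p becomes
   X_1^(p_1+...+p_e) X_2^p_2 ... X_e^p_e, so the coefficient of X^P in the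
   result is the coefficient of x^(psi P) in f, where
   psi P = (P_1 - (P_2+...+P_e), P_2, ..., P_e). *)
Definition subst_exp e (P : exps e) : exps e :=
  \row_(i < e) (if val i == 0%N then P 0 i - \sum_(j : 'I_e | val j != 0%N) P 0 j
                else P 0 i).

Definition subst_first (K : comNzRingType) e (f : ypoly K e) : ypoly K e :=
  fun k P => f k (subst_exp P).

Arguments orthant e : clear implicits.
Arguments coneC e : clear implicits.

(* Main.v *)
Require Import Defs.
From HB Require Import structures.
From mathcomp Require Import all_boot all_order all_algebra.
From mathcomp Require Import boolp classical_sets cardinality fsbigop.
From mathcomp Require Import zify ring.
Local Open Scope ring_scope.
Import GRing.Theory Num.Theory Order.TTheory.

Section Transport.
Local Set Implicit Arguments.
Variables (K : comNzRingType) (e : nat).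
Variables (T Ti : exps e -> exps e).
Hypotheses (TK : cancel T Ti) (TiK : cancel Ti T).
Hypothesis (TB : forall p q, T (p - q) = T p - T q).

Definition tr (P : ypoly K e) : ypoly K e := fun k p => P k (T p).

Lemma T0 : T 0 = 0.
Proof. by have := TB 0 0; rewrite subrr => ->; rewrite subrr. Qed.

Lemma smul_tr (a b : series K e) p :
  smul (fun q => a (T q)) (fun q => b (T q)) p = smul a b (T p).
Proof.
rewrite /smul (reindex_fsbigT T (fun q => a q * b (T p - q))); last by exists Ti.
by apply: eq_fsbigr => q _; rewrite TB.
Qed.

Lemma ymul_tr g h : ymul (tr g) (tr h) = tr (ymul g h).
Proof.
apply/funext => k; apply/funext => p; rewrite /ymul /tr.
by apply: eq_bigr => i _; rewrite smul_tr.
Qed.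

Lemma monic_tr P d : monic_deg P d -> monic_deg (tr P) d.
Proof.
move=> [H1 H2]; split.
  apply/funext => p; rewrite /tr H1 /sone.
  have -> : (T p == 0) = (p == 0).
    apply/eqP/eqP => [|->]; last exact: T0.
    by move=> H; rewrite -(TK p) H -{1}T0 TK.
  by [].
by move=> k hk; apply/funext => p; rewrite /tr H2.
Qed.
End Transport.

Lemma aux1 (a s : int) : 0 <= a -> - s <= a - s.
Proof. by move=> h; rewrite -[X in X <= _]sub0r lerD2r. Qed.
Lemma aux2 (a s : int) : - s <= a -> 0 <= a + s.
Proof. by rewrite -(lerD2r s) addNr. Qed.

Section Subst.
Variable e : nat.
Definition S (P : exps e) : int := \sum_(j : 'I_e | val j != 0%N) P 0 j.

Definition phi_exp (P : exps e) : exps e :=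
  \row_(i < e) (if val i == 0%N then P 0 i + S P else P 0 i).

Lemma psiE Q : subst_exp Q = \row_(i < e) (if val i == 0%N then
   Q 0 i - S Q else Q 0 i).
Proof. by []. Qed.

Lemma S_psi P : S (subst_exp P) = S P.
Proof. by apply: eq_bigr => j /negbTE hj; rewrite mxE hj. Qed.

Lemma S_phi P : S (phi_exp P) = S P.
Proof. by apply: eq_bigr => j /negbTE hj; rewrite mxE hj. Qed.

Lemma psiK : cancel (@subst_exp e) phi_exp.
Proof.
move=> P; apply/rowP => i; rewrite !mxE S_psi.
by rewrite /S; case: (_ == _) => //; rewrite subrK.
Qed.

Lemma phiK : cancel phi_exp (@subst_exp e).
Proof.
move=> P; apply/rowP => i.
have -> : subst_exp (phi_exp P) = \row_(i < e) (if val i == 0%N then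
   (phi_exp P) 0 i - S (phi_exp P) else (phi_exp P) 0 i) by [].
rewrite S_phi !mxE.
by rewrite /S; case: (_ == _) => //; rewrite addrK.
Qed.

Lemma SB p q : S (p - q) = S p - S q.
Proof.
rewrite /S -sumrB; apply: eq_bigr => j _; by rewrite !mxE.
Qed.

Lemma psiB (p q : exps e) : subst_exp (p - q) = subst_exp p - subst_exp q.
Proof.
rewrite !psiE; apply/rowP => i; rewrite !mxE SB; case: (_ == _) => //; ring.
Qed.

Lemma phiB (p q : exps e) : phi_exp (p - q) = phi_exp p - phi_exp q.
Proof.
apply/rowP => i; rewrite !mxE SB; case: (_ == _) => //; ring.
Qed.

Lemma psi_orth (p : exps e) : orthant e p -> coneC e (subst_exp p).
Proof.
move=> Hp; split => i hi; rewrite mxE.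
  by rewrite (negbTE hi); apply: Hp.
rewrite hi eqxx -/(S (subst_exp p)) S_psi.
exact: aux1.
Qed.

Lemma phi_cone (p : exps e) : coneC e p -> orthant e (phi_exp p).
Proof.
move=> [H1 H2] i; rewrite mxE; case: ifP => hi.
  exact: aux2 (H2 i (eqP hi)).
by apply: H1; rewrite hi.
Qed.
End Subst.

Theorem mainTheorem17 (K : closedFieldType) (hK : [pchar K] =i pred0)
    (e : nat) (he : (0 < e)%N) (n : nat) (hn : (0 < n)%N) (f : ypoly K e) :
  @coeffs_in K e (orthant e) f -> monic_deg f n ->
  (@irreducible_over K e (coneC e) f n <->
   @irreducible_over K e (orthant e) (subst_first f) n).
Proof.
move=> _ _; split => Hirr [g [h [d [hd [cg ch] mg mh gh]]]]; apply: Hirr.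
- exists (@tr K e (@phi_exp e) g), (@tr K e (@phi_exp e) h), d; split => //.
  + split => k p hp; rewrite -[p](@phiK e); apply: psi_orth.
    * exact: (cg k (phi_exp e p) hp).
    * exact: (ch k (phi_exp e p) hp).
  + exact: (monic_tr (@phiK e) (@phiB e)).
  + exact: (monic_tr (@phiK e) (@phiB e)).
  + have E := ymul_tr (K:=K) (@phiK e) (@psiK e) (@phiB e) g h.
    rewrite E gh; apply/funext => k; apply/funext => p.
    exact: (congr1 (f k) (@phiK e p)).
- exists (@tr K e (@subst_exp e) g), (@tr K e (@subst_exp e) h), d; split => //.
  + split => k p hp; rewrite -[p](@psiK e); apply: phi_cone.
    * exact: (cg k (subst_exp p) hp).
    * exact: (ch k (subst_exp p) hp).
  + exact: (monic_tr (@psiK e) (@psiB e)).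
  + exact: (monic_tr (@psiK e) (@psiB e)).
  + have E := ymul_tr (K:=K) (@psiK e) (@phiK e) (@psiB e) g h.
    exact: (etrans E (congr1 (@tr K e (@subst_exp e)) gh)).
Qed.
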